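(* Let $(\rho_0,p_0)$ be a solution of the TOV system on $[0,R)$ with regular centre, with mass function $m_0$, and let $$g_0(r)=\frac{m_0(r)+4\pi p_0(r)\,r^3}{r^2\,[1-2m_0(r)/r]},\qquad I_0(r)=\int_0^r g_0(s)\,ds .$$ For a real parameter $\delta p_c$ set $$D(r)=1+4\pi\,\delta p_c\int_0^r \frac{s\,e^{-2I_0(s)}}{\sqrt{1-2m_0(s)/s}}\,ds,\qquad \delta p(r)=\frac{\delta p_c\,\sqrt{1-2m_0(r)/r}\;e^{-2I_0(r)}}{D(r)} .$$ Then on every interval $[0,R')\subseteq[0,R)$ on which $D>0$, the pair $(\rho_0,\,p_0+\delta p)$ (same density, hence same mass function $m_0$) solves the TOV system with regular centre, and its central pressure is $p_0(0)+\delta p_c$. Conversely, every solution $(\rho_0,p)$ of the TOV system on $[0,R)$ with the same density $\rho_0$ and regular centre is of this form with $\delta p_c=p(0)-p_0(0)$.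
   Context: Units $G=c=1$. Given a continuous function $\rho$ on $[0,R)$ ($0<R\le\infty$), its mass function is $m(r)=4\pi\int_0^r\rho(s)s^2\,ds$. A pair $(\rho,p)$ with $\rho$ continuous and $p$ of class $C^1$ on $(0,R)$ ''solves the TOV system on $[0,R)$'' if $1-2m(r)/r>0$ for $0<r<R$ and $$\frac{dp}{dr}=-\frac{[\rho(r)+p(r)]\,[m(r)+4\pi p(r)r^3]}{r^2\,[1-2m(r)/r]}\quad (0<r<R).$$ It has ''regular centre'' if $\rho$ and $p$ extend continuously to $r=0$ with finite values $\rho(0)=\rho_c$ (central density) and $p(0)=p_c$ (central pressure). *)

(* Defs.v *)
From Stdlib Require Import Reals.
From Coquelicot Require Import Coquelicot.
Open Scope R_scope.

Definition mass (rho : R -> R) (r : R) : R :=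
  4 * PI * RInt (fun s => rho s * s ^ 2) 0 r.

Definition tov_rhs (rho p : R -> R) (r : R) : R :=
  - ((rho r + p r) * (mass rho r + 4 * PI * p r * r ^ 3))
    / (r ^ 2 * (1 - 2 * mass rho r / r)).

Definition solves_TOV (rho p : R -> R) (Rb : Rbar) : Prop :=
  filterlim rho (at_right 0) (locally (rho 0)) /\
  (forall r, 0 < r -> Rbar_lt r Rb -> continuous rho r) /\
  (forall r, 0 < r -> Rbar_lt r Rb -> ex_derive p r /\ continuous (Derive p) r) /\
  (forall r, 0 < r -> Rbar_lt r Rb -> 0 < 1 - 2 * mass rho r / r) /\
  (forall r, 0 < r -> Rbar_lt r Rb -> is_derive p r (tov_rhs rho p r)).

Definition regular_centre (rho p : R -> R) (pc : R) : Prop :=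
  filterlim rho (at_right 0) (locally (rho 0)) /\
  filterlim p (at_right 0) (locally pc).

Definition g0 (rho p : R -> R) (r : R) : R :=
  (mass rho r + 4 * PI * p r * r ^ 3) / (r ^ 2 * (1 - 2 * mass rho r / r)).

Definition I0 (rho p : R -> R) (r : R) : R := RInt (g0 rho p) 0 r.

Definition Dfun (rho p : R -> R) (dpc : R) (r : R) : R :=
  1 + 4 * PI * dpc *
      RInt (fun s => s * exp (-2 * I0 rho p s) / sqrt (1 - 2 * mass rho s / s)) 0 r.

Definition dpress (rho p : R -> R) (dpc : R) (r : R) : R :=
  dpc * sqrt (1 - 2 * mass rho r / r) * exp (-2 * I0 rho p r) / Dfun rho p dpc r.

(* Main.v *)
Require Import Defs.
From Stdlib Require Import Reals Lra.
From Coquelicot Require Import Coquelicot.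
Open Scope R_scope.

Section L.
Context {T : Type} {F : (T -> Prop) -> Prop} {FF : Filter F}.
Lemma lim_mult (f g : T -> R) a b : filterlim f F (locally a) -> filterlim g F (locally b) ->
  filterlim (fun x => f x * g x) F (locally (a*b)).
Proof. intros H1 H2. eapply filterlim_comp_2; [exact H1|exact H2|]. exact (@filterlim_mult R_AbsRing a b). Qed.
Lemma lim_plus (f g : T -> R) a b : filterlim f F (locally a) -> filterlim g F (locally b) ->
  filterlim (fun x => f x + g x) F (locally (a+b)).
Proof. intros H1 H2. eapply filterlim_comp_2; [exact H1|exact H2|]. exact (@filterlim_plus R_AbsRing R_NormedModule a b). Qed.
Lemma lim_cont (f : T -> R) (g : R -> R) a : filterlim f F (locally a) -> continuous g a ->
  filterlim (fun x => g (f x)) F (locally (g a)).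
Proof. intros H1 H2. eapply filterlim_comp; eauto. Qed.
Lemma lim_const (a : R) : filterlim (fun _ : T => a) F (locally a).
Proof. apply filterlim_const. Qed.
End L.

Lemma cont_inv : forall x, x <> 0 -> continuous Rinv x.
Proof. intros. apply continuity_pt_filterlim. apply continuity_pt_inv. apply continuity_pt_id. auto. Qed.
Lemma cont_sqrt : forall x, 0 < x -> continuous sqrt x.
Proof. intros. apply continuity_pt_filterlim. apply continuity_pt_sqrt. lra. Qed.
Lemma cont_exp : forall x, continuous exp x.
Proof. intros. apply continuity_pt_filterlim. apply derivable_continuous_pt. apply derivable_pt_exp. Qed.
Lemma lim_id0 : filterlim (fun x : R => x) (at_right 0) (locally 0).
Proof. intros P HP. destruct HP as [e He]. exists e. intros y Hy _. apply He. exact Hy. Qed.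

Lemma C0ext (f : R -> R) (l : R) b : 0 < b -> (forall c, 0 < c < b -> continuous f c) ->
  filterlim f (at_right 0) (locally l) ->
  exists g : R -> R, (forall c, c < b -> continuous g c) /\ (forall c, 0 < c -> g c = f c).
Proof. intros H1 H2 H3. destruct (C0_extension_left f l 0 b H1 H2 H3) as [g [G1 [G2 _]]].
  exists g. split; assumption. Qed.

Lemma master (f : R -> R) l b : 0 < b -> (forall c, 0 < c < b -> continuous f c) ->
  filterlim f (at_right 0) (locally l) ->
  (forall x, 0 < x < b -> is_derive (RInt f 0) x (f x)) /\
  filterlim (RInt f 0) (at_right 0) (locally 0) /\
  (exists G : R -> R, (forall z, z < b -> continuous G z) /\ (forall z, 0 <= z -> G z = RInt f 0 z)) /\
  (forall y, 0 <= y < b -> ex_RInt f 0 y).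
Proof.
  intros Hb Hc Hl.
  destruct (C0ext f l b Hb Hc Hl) as [g [Hg1 Hg2]].
  assert (Eg : forall y, y < b -> ex_RInt g 0 y).
  { intros y Hy. apply (ex_RInt_continuous (V:=R_CompleteNormedModule)). intros z Hz. apply Hg1.
    destruct Hz as [_ Hz]. apply Rle_lt_trans with (1 := Hz). apply Rmax_lub_lt; lra. }
  assert (Efg : forall y, 0 <= y -> RInt f 0 y = RInt g 0 y).
  { intros y Hy. apply RInt_ext. intros x Hx. rewrite Rmin_left in Hx by lra.
    symmetry. apply Hg2. lra. }
  assert (Ef : forall y, 0 <= y < b -> ex_RInt f 0 y).
  { intros y Hy. apply (ex_RInt_ext (V:=R_CompleteNormedModule)) with g. intros x Hx. rewrite Rmin_left in Hx by lra.
    apply Hg2. lra. apply Eg. lra. }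
  assert (Dg : forall z, z < b -> is_derive (RInt g 0) z (g z)).
  { intros z Hz. apply (is_derive_RInt g (RInt g 0) 0). 2: apply Hg1, Hz.
    assert (He : 0 < b - z) by lra.
    exists (mkposreal _ He). intros y Hy. apply (RInt_correct (V:=R_CompleteNormedModule)). apply Eg.
    apply Rabs_lt_between' in Hy. simpl in Hy. lra. }
  split; [|split; [|split]].
  - intros x Hx. apply (is_derive_RInt f (RInt f 0) 0). 2: apply Hc, Hx.
    assert (He : 0 < Rmin x (b - x)) by (apply Rmin_glb_lt; lra).
    exists (mkposreal _ He). intros y Hy. apply (RInt_correct (V:=R_CompleteNormedModule)). apply Ef.
    apply Rabs_lt_between' in Hy. simpl in Hy.
    pose proof (Rmin_l x (b-x)). pose proof (Rmin_r x (b-x)). lra.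
  - apply filterlim_ext_loc with (RInt g 0).
    + exists (mkposreal _ Hb). intros y _ Hy. symmetry. apply Efg. lra.
    + assert (E0 : RInt g 0 0 = 0) by (rewrite RInt_point; reflexivity).
      assert (C : continuous (RInt g 0) 0) by (apply (@ex_derive_continuous R_AbsRing R_NormedModule); eexists; apply Dg; lra).
      intros P HP. rewrite <- E0 in HP. specialize (C P HP). destruct C as [e He]. exists e. intros y Hy _. apply He, Hy.
  - exists (RInt g 0). split.
    + intros z Hz. apply (@ex_derive_continuous R_AbsRing R_NormedModule). eexists. apply Dg. exact Hz.
    + intros z Hz. symmetry. apply Efg, Hz.
  - exact Ef.
Qed.
Lemma ballR (x : R) (e : R) (He : 0 < e) y : ball x (mkposreal e He) y <-> Rabs (y - x) < e.
Proof. split; intro H; exact H. Qed.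
Lemma ballR' (x : R) (e : posreal) y : ball x e y <-> Rabs (y - x) < e.
Proof. split; intro H; exact H. Qed.
Lemma exb (Rb : Rbar) y : 0 <= y -> Rbar_lt y Rb ->
  exists b, y < b /\ 0 < b /\ (forall c, c < b -> Rbar_lt c Rb).
Proof.
  intros H0 H. destruct Rb as [r| |]; simpl in *.
  - exists r. repeat split; try lra. intros c Hc; simpl; lra.
  - exists (y+1). repeat split; try lra. intros; simpl; auto.
  - contradiction.
Qed.

Lemma cont_pow2 x : continuous (fun s : R => s ^ 2) x.
Proof. apply continuity_pt_filterlim. apply derivable_continuous_pt. apply derivable_pt_pow. Qed.

Lemma lim_pow2_0 : filterlim (fun s : R => s ^ 2) (at_right 0) (locally 0).
Proof. apply filterlim_ext with (fun s => s * s). intros; ring.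
  pose proof (lim_mult (F:=at_right 0) _ _ _ _ lim_id0 lim_id0) as H.
  rewrite Rmult_0_l in H. exact H. Qed.

Lemma mass_r2 rho b : 0 < b -> (forall c, 0 < c < b -> continuous rho c) ->
  filterlim rho (at_right 0) (locally (rho 0)) ->
  filterlim (fun r => mass rho r / r ^ 2) (at_right 0) (locally 0).
Proof.
  intros Hb Hc Hl.
  destruct (master (fun s => rho s * s ^ 2) 0 b Hb) as [_ [_ [_ Ex]]].
  { intros c Hc'. apply (continuous_mult (K:=R_AbsRing)). apply Hc, Hc'. apply cont_pow2. }
  { pose proof (lim_mult _ _ _ _ Hl lim_pow2_0) as H. rewrite Rmult_0_r in H. exact H. }
  pose (K := Rabs (rho 0) + 1).
  assert (HK : 0 < K) by (unfold K; pose proof (Rabs_pos (rho 0)); lra).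
  assert (H1 : 0 < 1) by lra.
  destruct (Hl _ (locally_ball (rho 0) (mkposreal 1 H1))) as [d Hd].
  apply filterlim_locally. intros eps.
  assert (He : 0 < Rmin (Rmin d b) (eps / (4 * PI * K))).
  { apply Rmin_glb_lt. apply Rmin_glb_lt. apply cond_pos. auto.
    apply Rdiv_lt_0_compat. apply cond_pos. pose proof PI_RGT_0. nra. }
  exists (mkposreal _ He). intros r Hr Hr0.
  change (Rabs (r - 0) < Rmin (Rmin d b) (eps / (4 * PI * K))) in Hr.
  rewrite Rminus_0_r, Rabs_pos_eq in Hr by lra.
  pose proof (Rmin_l (Rmin d b) (eps / (4 * PI * K))) as M1.
  pose proof (Rmin_r (Rmin d b) (eps / (4 * PI * K))) as M2.
  pose proof (Rmin_l d b) as M3. pose proof (Rmin_r d b) as M4.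
  change (Rabs (mass rho r / r ^ 2 - 0) < eps). rewrite Rminus_0_r. unfold mass.
  assert (B : Rabs (RInt (fun s => rho s * s ^ 2) 0 r) <= (r - 0) * (K * r ^ 2)).
  { apply abs_RInt_le_const. lra. apply Ex. lra.
    intros t Ht. rewrite Rabs_mult. rewrite (Rabs_pos_eq (t^2)) by (apply pow2_ge_0).
    destruct (Req_dec t 0) as [->|Ht0].
    - simpl. rewrite Rmult_0_l, Rmult_0_r. apply Rmult_le_pos. lra. apply pow2_ge_0.
    - assert (Hb1 : Rabs (rho t) <= K).
      { assert (Hbt : ball 0 d t). { change (Rabs (t - 0) < d). rewrite Rminus_0_r, Rabs_pos_eq; lra. }
        specialize (Hd t Hbt ltac:(lra)). change (Rabs (rho t - rho 0) < 1) in Hd.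
        unfold K. pose proof (Rabs_triang_inv (rho t) (rho 0)). lra. }
      apply Rmult_le_compat; try lra. apply Rabs_pos. apply pow2_ge_0.
      apply pow_incr. lra. }
  assert (Hr2 : 0 < r ^ 2) by (apply pow_lt; lra).
  rewrite Rabs_div by lra. rewrite (Rabs_pos_eq (r^2)) by lra.
  rewrite Rabs_mult. rewrite (Rabs_pos_eq (4*PI)) by (pose proof PI_RGT_0; lra).
  apply Rmult_lt_reg_r with (r ^ 2). exact Hr2.
  unfold Rdiv. rewrite Rmult_assoc, Rinv_l, Rmult_1_r by lra.
  apply Rle_lt_trans with (4 * PI * ((r - 0) * (K * r ^ 2))).
  apply Rmult_le_compat_l. pose proof PI_RGT_0; lra. exact B.
  assert (r * (4 * PI * K) < eps).
  { apply Rlt_le_trans with ((eps / (4 * PI * K)) * (4*PI*K)). apply Rmult_lt_compat_r.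
    pose proof PI_RGT_0; nra. lra. right. field. pose proof PI_RGT_0; nra. }
  nra.
Qed.

Lemma masterJ (f : R -> R) l (Rb : Rbar) : Rbar_lt 0 Rb ->
  (forall c, 0 < c -> Rbar_lt c Rb -> continuous f c) ->
  filterlim f (at_right 0) (locally l) ->
  (forall x, 0 < x -> Rbar_lt x Rb -> is_derive (RInt f 0) x (f x)) /\
  filterlim (RInt f 0) (at_right 0) (locally 0) /\
  (forall y, 0 < y -> Rbar_lt y Rb -> exists G : R -> R,
     (forall z, z <= y -> continuous G z) /\ (forall z, 0 <= z -> G z = RInt f 0 z)).
Proof.
  intros H0 Hc Hl. split; [|split].
  - intros x Hx HxR. destruct (exb Rb x ltac:(lra) HxR) as [b [Hxb [Hb Hcb]]].
    destruct (master f l b Hb) as [D _]; auto.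
    intros c Hc'. apply Hc. lra. apply Hcb. lra.
  - destruct (exb Rb 0 ltac:(lra) H0) as [b [Hxb [Hb Hcb]]].
    destruct (master f l b Hb) as [_ [L _]]; auto.
    intros c Hc'. apply Hc. lra. apply Hcb. lra.
  - intros y Hy HyR. destruct (exb Rb y ltac:(lra) HyR) as [b [Hxb [Hb Hcb]]].
    destruct (master f l b Hb) as [_ [_ [[G [G1 G2]] _]]]; auto.
    intros c Hc'. apply Hc. lra. apply Hcb. lra.
    exists G. split; auto. intros z Hz. apply G1. lra.
Qed.

Lemma Rbar_lt_le_trans' (x : R) (a b : Rbar) : Rbar_lt x a -> Rbar_le a b -> Rbar_lt x b.
Proof. intros. eapply Rbar_lt_le_trans; eauto. Qed.

Definition Af (rho : R -> R) (r : R) := 1 - 2 * mass rho r / r.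
Definition kt (rho p : R -> R) (s : R) := s * exp (-2 * I0 rho p s) / sqrt (1 - 2 * mass rho s / s).

Lemma base_mass (rho0 : R -> R) Rb : Rbar_lt 0 Rb ->
  filterlim rho0 (at_right 0) (locally (rho0 0)) ->
  (forall r, 0 < r -> Rbar_lt r Rb -> continuous rho0 r) ->
  (forall r, 0 < r -> Rbar_lt r Rb -> is_derive (mass rho0) r (4 * PI * (rho0 r * r ^ 2))) /\
  filterlim (fun r => mass rho0 r / r ^ 2) (at_right 0) (locally 0).
Proof.
  intros H0 Hl Hc.
  destruct (masterJ (fun s => rho0 s * s ^ 2) 0 Rb H0) as [D _].
  { intros c Hc1 Hc2. apply (continuous_mult (K:=R_AbsRing)). apply Hc; auto. apply cont_pow2. }
  { pose proof (lim_mult _ _ _ _ Hl lim_pow2_0) as H. rewrite Rmult_0_r in H. exact H. }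
  split.
  - intros r Hr HrR. unfold mass. specialize (D r Hr HrR).
    replace (4 * PI * (rho0 r * r ^ 2)) with (4 * PI * (rho0 r * r ^ 2)) by ring.
    apply (is_derive_scal _ r (4*PI) _ D).
  - destruct (exb Rb 0 ltac:(lra) H0) as [b [Hxb [Hb Hcb]]].
    apply (mass_r2 rho0 b Hb); auto. intros c Hc'. apply Hc. lra. apply Hcb. lra.
Qed.

Section L2.
Context {T : Type} {F : (T -> Prop) -> Prop} {FF : Filter F}.
Lemma lim_eqv (f : T -> R) a b : filterlim f F (locally a) -> a = b -> filterlim f F (locally b).
Proof. intros H ->; exact H. Qed.
Lemma lim_inv (f : T -> R) a : filterlim f F (locally a) -> a <> 0 -> filterlim (fun x => / f x) F (locally (/ a)).
Proof. intros. apply lim_cont; auto. apply cont_inv; auto. Qed.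
Lemma lim_sqrt (f : T -> R) a : filterlim f F (locally a) -> 0 < a -> filterlim (fun x => sqrt (f x)) F (locally (sqrt a)).
Proof. intros. apply lim_cont; auto. apply cont_sqrt; auto. Qed.
Lemma lim_exp (f : T -> R) a : filterlim f F (locally a) -> filterlim (fun x => exp (f x)) F (locally (exp a)).
Proof. intros. apply lim_cont; auto. apply cont_exp. Qed.
Lemma lim_opp (f : T -> R) a : filterlim f F (locally a) -> filterlim (fun x => - f x) F (locally (- a)).
Proof. intros. apply lim_cont with (g := Ropp); auto. apply continuity_pt_filterlim. apply continuity_pt_opp, continuity_pt_id. Qed.
End L2.

Lemma lim_pow {T : Type} {F : (T -> Prop) -> Prop} {FF : Filter F} (f : T -> R) a n :
  filterlim f F (locally a) -> filterlim (fun x => f x ^ n) F (locally (a ^ n)).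
Proof. intros. apply lim_cont with (g := fun y => y ^ n); auto.
  apply continuity_pt_filterlim. apply derivable_continuous_pt. apply derivable_pt_pow. Qed.

Ltac lim_tac :=
  match goal with
  | |- _ => eassumption
  | |- filterlim (fun x => (@?f x) ^ ?n) _ _ => apply (lim_pow f); lim_tac
  | |- filterlim (fun x : R => x) (locally _) _ => apply filterlim_id
  | |- filterlim (fun x => @?f x + @?g x) _ _ => apply (lim_plus f g); lim_tac
  | |- filterlim (fun x => @?f x * @?g x) _ _ => apply (lim_mult f g); lim_tac
  | |- filterlim (fun x => - @?f x) _ _ => apply (lim_opp f); lim_tac
  | |- filterlim (fun x => / @?f x) _ _ => apply (lim_inv f); [lim_tac|]
  | |- filterlim (fun x => sqrt (@?f x)) _ _ => apply (lim_sqrt f); [lim_tac|]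
  | |- filterlim (fun x => exp (@?f x)) _ _ => apply (lim_exp f); lim_tac
  | |- filterlim (fun x => ?c) _ _ => apply lim_const
  | |- filterlim (fun x : R => x) (at_right 0) _ => apply lim_id0
  | |- _ => eassumption
  end.

Lemma exd_cont (f : R -> R) (x : R) : ex_derive f x -> continuous f x.
Proof. apply (@ex_derive_continuous R_AbsRing R_NormedModule). Qed.

Ltac rr := match goal with |- @eq _ ?a ?b => change (@eq R a b) end.

Lemma evr : at_right 0 (fun r : R => 0 < r).
Proof. exists (mkposreal 1 Rlt_0_1). intros y _ Hy. exact Hy. Qed.

Lemma evJ (Rb : Rbar) : Rbar_lt 0 Rb -> at_right 0 (fun r : R => 0 < r /\ Rbar_lt r Rb).
Proof. intros H. destruct (exb Rb 0 ltac:(lra) H) as [b [_ [Hb Hcb]]].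
  exists (mkposreal b Hb). intros y Hy Hy0. split; auto. apply Hcb.
  change (Rabs (y - 0) < b) in Hy. rewrite Rminus_0_r, Rabs_pos_eq in Hy; lra. Qed.

Lemma Apos_mul (m r : R) : 0 < r -> 0 < 1 - 2 * m / r -> 0 < r - 2 * m.
Proof. intros H1 H2. replace (r - 2 * m) with (r * (1 - 2 * m / r)) by (field; lra).
  apply Rmult_lt_0_compat; auto. Qed.

Lemma Apos_form rho r : 0 < 1 - 2 * mass rho r / r -> 0 < 1 + - (2 * mass rho r * / r).
Proof. unfold Rminus, Rdiv. auto. Qed.

Lemma base (rho0 p0 : R -> R) Rb p0c : Rbar_lt 0 Rb -> solves_TOV rho0 p0 Rb ->
  filterlim p0 (at_right 0) (locally p0c) ->
  (forall r, 0 < r -> Rbar_lt r Rb -> is_derive (mass rho0) r (4 * PI * (rho0 r * r ^ 2))) /\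
  filterlim (fun r => mass rho0 r / r ^ 2) (at_right 0) (locally 0) /\
  filterlim (fun r => 1 - 2 * mass rho0 r / r) (at_right 0) (locally 1) /\
  (forall r, 0 < r -> Rbar_lt r Rb -> is_derive (I0 rho0 p0) r (g0 rho0 p0 r)) /\
  filterlim (I0 rho0 p0) (at_right 0) (locally 0) /\
  (forall r, 0 < r -> Rbar_lt r Rb -> is_derive (RInt (kt rho0 p0) 0) r (kt rho0 p0 r)) /\
  filterlim (RInt (kt rho0 p0) 0) (at_right 0) (locally 0) /\
  (forall y, 0 < y -> Rbar_lt y Rb -> exists G : R -> R,
     (forall z, z <= y -> continuous G z) /\ (forall z, 0 <= z -> G z = RInt (kt rho0 p0) 0 z)).
Proof.
  intros H0 [Hl [Hc [Hd [HA Ht]]]] Hp.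
  destruct (base_mass rho0 Rb H0 Hl Hc) as [Dm Lm].
  assert (LA : filterlim (fun r => 1 - 2 * mass rho0 r / r) (at_right 0) (locally 1)).
  { apply filterlim_ext_loc with (fun r => 1 + - (2 * (r * (mass rho0 r / r ^ 2)))).
    { apply (filter_imp (fun r : R => 0 < r)); [|apply evr]. intros r Hr. field. lra. }
    eapply lim_eqv. lim_tac. rr; ring. }
  assert (Cg : forall c, 0 < c -> Rbar_lt c Rb -> continuous (g0 rho0 p0) c).
  { intros c Hc1 Hc2. apply exd_cont. unfold g0. auto_derive.
    pose proof (Apos_form _ _ (HA c Hc1 Hc2)).
    repeat split; try (eexists; apply Dm; auto); try (apply Hd; auto); try lra.
    apply Rmult_integral_contrapositive_currified; try lra. nra. }
  assert (Lg : filterlim (g0 rho0 p0) (at_right 0) (locally 0)).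
  { apply filterlim_ext_loc with (fun r => (mass rho0 r / r ^ 2 + 4 * PI * (p0 r * r)) * / (1 + - (2 * (r * (mass rho0 r / r ^ 2))))).
    { apply (filter_imp (fun r : R => 0 < r /\ Rbar_lt r Rb)); [|apply evJ; auto].
      intros r [Hr HrR]. pose proof (HA r Hr HrR) as HAr. unfold g0.
      assert (E : 1 + - (2 * (r * (mass rho0 r / r ^ 2))) = 1 - 2 * mass rho0 r / r) by (field; lra).
      rewrite E. pose proof (Apos_mul _ _ Hr HAr). field. split; lra. }
    eapply lim_eqv. lim_tac. lra. rr; field; lra. }
  destruct (masterJ (g0 rho0 p0) 0 Rb H0 Cg Lg) as [DI [LI _]].
  assert (Ck : forall c, 0 < c -> Rbar_lt c Rb -> continuous (kt rho0 p0) c).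
  { intros c Hc1 Hc2. apply exd_cont. unfold kt. auto_derive.
    pose proof (Apos_form _ _ (HA c Hc1 Hc2)).
    repeat split; try (eexists; apply Dm; auto); try (eexists; apply DI; auto); try lra.
    apply Rgt_not_eq, sqrt_lt_R0; auto. }
  assert (Lk : filterlim (kt rho0 p0) (at_right 0) (locally 0)).
  { unfold kt, Rdiv, Rminus. eapply lim_eqv. lim_tac. lra. rewrite sqrt_1; lra. rr; ring. }
  destruct (masterJ (kt rho0 p0) 0 Rb H0 Ck Lk) as [DK [LK GK]].
  exact (conj Dm (conj Lm (conj LA (conj DI (conj LI (conj DK (conj LK GK))))))).
Qed.

Definition KI (rho p : R -> R) (r : R) := RInt (kt rho p) 0 r.

Lemma fwd_deriv (rho0 p0 : R -> R) dpc r : 0 < r -> 0 < 1 - 2 * mass rho0 r / r ->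
  is_derive (mass rho0) r (4 * PI * (rho0 r * r ^ 2)) ->
  is_derive (I0 rho0 p0) r (g0 rho0 p0 r) ->
  is_derive (KI rho0 p0) r (kt rho0 p0 r) ->
  is_derive p0 r (tov_rhs rho0 p0 r) ->
  0 < Dfun rho0 p0 dpc r ->
  is_derive (fun y => p0 y + dpress rho0 p0 dpc y) r
    (tov_rhs rho0 (fun y => p0 y + dpress rho0 p0 dpc y) r).
Proof.
  intros Hr HA Dm DI DK Dp HD.
  change (is_derive (fun y => p0 y + dpc * sqrt (1 - 2 * mass rho0 y / y) * exp (-2 * I0 rho0 p0 y) /
     (1 + 4 * PI * dpc * KI rho0 p0 y)) r
    (tov_rhs rho0 (fun y => p0 y + dpc * sqrt (1 - 2 * mass rho0 y / y) * exp (-2 * I0 rho0 p0 y) /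
     (1 + 4 * PI * dpc * KI rho0 p0 y)) r)).
  change (0 < 1 + 4 * PI * dpc * KI rho0 p0 r) in HD.
  auto_derive.
  - split. eexists; exact Dp. split. eexists; exact Dm. split. lra.
    split. unfold Rminus, Rdiv in HA; lra. split. eexists; exact DI. split. eexists; exact DK.
    split. lra. exact I.
  - replace (Derive (fun x => mass rho0 x) r) with (4 * PI * (rho0 r * r ^ 2)) by (symmetry; apply is_derive_unique; exact Dm).
    replace (Derive (fun x => I0 rho0 p0 x) r) with (g0 rho0 p0 r) by (symmetry; apply is_derive_unique; exact DI).
    replace (Derive (fun x => KI rho0 p0 x) r) with (kt rho0 p0 r) by (symmetry; apply is_derive_unique; exact DK).
    replace (Derive (fun x => p0 x) r) with (tov_rhs rho0 p0 r) by (symmetry; apply is_derive_unique; exact Dp).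
    unfold tov_rhs, g0, kt. unfold Rminus, Rdiv in *.
    assert (Hs : sqrt (1 + - (2 * mass rho0 r * / r)) * sqrt (1 + - (2 * mass rho0 r * / r)) = 1 + - (2 * mass rho0 r * / r)) by (apply sqrt_sqrt; lra).
    assert (Hs0 : 0 < sqrt (1 + - (2 * mass rho0 r * / r))) by (apply sqrt_lt_R0; lra).
    set (s := sqrt (1 + - (2 * mass rho0 r * / r))) in *.
    set (e := exp (-2 * I0 rho0 p0 r)).
    assert (He : 0 < e) by apply exp_pos.
    clearbody s e.
    assert (Hm : mass rho0 r = r * (1 - s * s) / 2).
    { assert (E : mass rho0 r = r * (1 - (1 + - (2 * mass rho0 r * / r))) / 2) by (field; lra).
      rewrite E at 1. rewrite <- Hs. reflexivity. }
    rewrite Hm. set (K := KI rho0 p0 r) in *. clearbody K.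
    set (rr := rho0 r). set (P := p0 r). field. repeat split; try lra.
Qed.

Definition vfun (rho0 p0 p : R -> R) (y : R) :=
  (p y - p0 y) / (sqrt (1 - 2 * mass rho0 y / y) * exp (-2 * I0 rho0 p0 y)).

Lemma conv_deriv (rho0 p0 p Phi : R -> R) dpc r : 0 < r -> 0 < 1 - 2 * mass rho0 r / r ->
  is_derive (mass rho0) r (4 * PI * (rho0 r * r ^ 2)) ->
  is_derive (I0 rho0 p0) r (g0 rho0 p0 r) ->
  is_derive (KI rho0 p0) r (kt rho0 p0 r) ->
  is_derive p0 r (tov_rhs rho0 p0 r) ->
  is_derive p r (tov_rhs rho0 p r) ->
  is_derive Phi r (4 * PI * kt rho0 p0 r * vfun rho0 p0 p r) ->
  is_derive (fun y => (vfun rho0 p0 p y * (1 + 4 * PI * dpc * KI rho0 p0 y) - dpc) * exp (Phi y)) r 0.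
Proof.
  intros Hr HA Dm DI DK Dp Dq DP.
  unfold vfun. auto_derive.
  - split. eexists; exact Dq. split. eexists; exact Dp. split. eexists; exact Dm. split. lra.
    split. unfold Rminus, Rdiv in HA; lra. split. eexists; exact DI. split.
    apply Rgt_not_eq, Rmult_lt_0_compat. apply sqrt_lt_R0. unfold Rminus, Rdiv in HA; lra. apply exp_pos.
    split. eexists; exact DK. split. eexists; exact DP. exact I.
  - replace (Derive (fun x => mass rho0 x) r) with (4 * PI * (rho0 r * r ^ 2)) by (symmetry; apply is_derive_unique; exact Dm).
    replace (Derive (fun x => I0 rho0 p0 x) r) with (g0 rho0 p0 r) by (symmetry; apply is_derive_unique; exact DI).
    replace (Derive (fun x => KI rho0 p0 x) r) with (kt rho0 p0 r) by (symmetry; apply is_derive_unique; exact DK).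
    replace (Derive (fun x => p0 x) r) with (tov_rhs rho0 p0 r) by (symmetry; apply is_derive_unique; exact Dp).
    replace (Derive (fun x => p x) r) with (tov_rhs rho0 p r) by (symmetry; apply is_derive_unique; exact Dq).
    replace (Derive (fun x => Phi x) r) with (4 * PI * kt rho0 p0 r * vfun rho0 p0 p r) by (symmetry; apply is_derive_unique; exact DP).
    unfold tov_rhs, g0, kt, vfun. unfold Rminus, Rdiv in *.
    assert (Hs : sqrt (1 + - (2 * mass rho0 r * / r)) * sqrt (1 + - (2 * mass rho0 r * / r)) = 1 + - (2 * mass rho0 r * / r)) by (apply sqrt_sqrt; lra).
    assert (Hs0 : 0 < sqrt (1 + - (2 * mass rho0 r * / r))) by (apply sqrt_lt_R0; lra).
    set (s := sqrt (1 + - (2 * mass rho0 r * / r))) in *.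
    set (e := exp (-2 * I0 rho0 p0 r)).
    assert (He : 0 < e) by apply exp_pos.
    clearbody s e.
    assert (Hm : mass rho0 r = r * (1 - s * s) / 2).
    { assert (E : mass rho0 r = r * (1 - (1 + - (2 * mass rho0 r * / r))) / 2) by (field; lra).
      rewrite E at 1. rewrite <- Hs. reflexivity. }
    rewrite Hm. set (K := KI rho0 p0 r) in *. clearbody K.
    field. repeat split; try lra.
Qed.

Lemma locJ r (Rb : Rbar) : 0 < r -> Rbar_lt r Rb -> locally r (fun y => 0 < y /\ Rbar_lt y Rb).
Proof.
  intros Hr HR. destruct (exb Rb r ltac:(lra) HR) as [b [Hrb [Hb Hcb]]].
  assert (He : 0 < Rmin r (b - r)) by (apply Rmin_glb_lt; lra).
  exists (mkposreal _ He). intros y Hy. change (Rabs (y - r) < Rmin r (b - r)) in Hy.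
  apply Rabs_lt_between' in Hy. pose proof (Rmin_l r (b-r)). pose proof (Rmin_r r (b-r)).
  split. lra. apply Hcb. lra.
Qed.

Lemma forward (rho0 p0 : R -> R) Rb p0c dpc (Rb' : Rbar) : Rbar_lt 0 Rb -> solves_TOV rho0 p0 Rb ->
  regular_centre rho0 p0 p0c -> Rbar_lt 0 Rb' -> Rbar_le Rb' Rb ->
  (forall r, 0 <= r -> Rbar_lt r Rb' -> 0 < Dfun rho0 p0 dpc r) ->
  solves_TOV rho0 (fun r => p0 r + dpress rho0 p0 dpc r) Rb' /\
  regular_centre rho0 (fun r => p0 r + dpress rho0 p0 dpc r) (p0c + dpc).
Proof.
  intros H0 HS [Hl Hp] H0' Hle HD.
  pose proof HS as [_ [Hc [Hd [HA Ht]]]].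
  destruct (base rho0 p0 Rb p0c H0 HS Hp) as [Dm [Lm [LA [DI [LI [DK [LK GK]]]]]]].
  assert (Dn : forall r, 0 < r -> Rbar_lt r Rb' -> is_derive (fun r => p0 r + dpress rho0 p0 dpc r) r
      (tov_rhs rho0 (fun r => p0 r + dpress rho0 p0 dpc r) r)).
  { intros r Hr HrR. assert (HrR0 := Rbar_lt_le_trans' _ _ _ HrR Hle).
    apply fwd_deriv; auto; try exact (DK r Hr HrR0); apply HD; auto; lra. }
  set (q := fun r => p0 r + dpress rho0 p0 dpc r) in *.
  split.
  - split. exact Hl. split.
    { intros r Hr HrR. apply Hc; auto. eapply Rbar_lt_le_trans'; eauto. }
    split.
    { intros r Hr HrR. assert (HrR0 := Rbar_lt_le_trans' _ _ _ HrR Hle). split.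
      eexists; apply Dn; auto.
      apply continuous_ext_loc with (tov_rhs rho0 q).
      - apply (filter_imp (fun y => 0 < y /\ Rbar_lt y Rb')); [|exact (locJ r Rb' Hr HrR)]. intros y [Hy HyR].
        symmetry. apply is_derive_unique. apply Dn; auto.
      - assert (Cr : continuous rho0 r) by auto.
        assert (Cq : continuous q r) by (apply exd_cont; eexists; apply Dn; auto).
        assert (Cm : continuous (mass rho0) r) by (apply exd_cont; eexists; apply Dm; auto).
        pose proof (HA r Hr HrR0) as HAr. pose proof (Apos_mul _ _ Hr HAr).
        unfold continuous, tov_rhs. unfold Rminus, Rdiv. eapply lim_eqv. lim_tac.
        + lra.
        + unfold Rminus, Rdiv in HAr. apply Rmult_integral_contrapositive_currified.
          apply pow_nonzero; lra. lra.
        + reflexivity. }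
    split.
    { intros r Hr HrR. apply HA; auto. eapply Rbar_lt_le_trans'; eauto. }
    exact Dn.
  - split. exact Hl.
    unfold q, dpress, Dfun. unfold Rminus, Rdiv. eapply lim_eqv. lim_tac.
    + lra.
    + rewrite Rmult_0_r; lra.
    + rr. rewrite sqrt_1. replace (-2 * 0) with 0 by ring. rewrite exp_0. field.
Qed.

Lemma const_J (f : R -> R) (Rb : Rbar) : (forall r, 0 < r -> Rbar_lt r Rb -> is_derive f r 0) ->
  forall x y, 0 < x -> Rbar_lt x Rb -> 0 < y -> Rbar_lt y Rb -> f x = f y.
Proof.
  intros Hd.
  assert (W : forall x y, x <= y -> 0 < x -> Rbar_lt x Rb -> 0 < y -> Rbar_lt y Rb -> f x = f y).
  { intros x y Hxy Hx HxR Hy HyR.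
    assert (Ct : forall t, 0 < t -> Rbar_lt t Rb -> continuity_pt f t).
    { intros t Ht HtR. apply continuity_pt_filterlim. apply exd_cont. eexists. apply Hd; auto. }
    destruct (fn_eq_Derive_eq f (fun _ => 0) x y) as [C HC].
    - auto.
    - auto.
    - apply continuity_pt_const. intros a b; reflexivity.
    - apply continuity_pt_const. intros a b; reflexivity.
    - intros z Hz. eexists. apply Hd. lra. apply Rbar_le_lt_trans with (Finite y); auto. simpl; lra.
    - intros z Hz. auto_derive. auto.
    - intros z Hz. rewrite Derive_const. apply is_derive_unique. apply Hd. lra.
      apply Rbar_le_lt_trans with (Finite y); auto. simpl; lra.
    - rewrite (HC x), (HC y); lra. }
  intros x y Hx HxR Hy HyR. destruct (Rle_dec x y).
  - apply W; auto.
  - symmetry. apply W; auto. lra.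
Qed.

Lemma zero_from_lim (f : R -> R) (Rb : Rbar) : Rbar_lt 0 Rb ->
  (forall x y, 0 < x -> Rbar_lt x Rb -> 0 < y -> Rbar_lt y Rb -> f x = f y) ->
  filterlim f (at_right 0) (locally 0) ->
  forall r, 0 < r -> Rbar_lt r Rb -> f r = 0.
Proof.
  intros H0 Hc Hl r Hr HrR. destruct (Req_dec (f r) 0) as [E|E]; auto. exfalso.
  assert (He : 0 < Rabs (f r)) by (apply Rabs_pos_lt; auto).
  pose proof (proj1 (filterlim_locally f 0) Hl (mkposreal _ He)) as H1.
  pose proof (filter_and _ _ H1 (evJ Rb H0)) as H2.
  destruct H2 as [d Hd].
  assert (Hb : ball 0 d (d / 2)).
  { change (Rabs (d / 2 - 0) < d). rewrite Rminus_0_r, Rabs_pos_eq. pose proof (cond_pos d). lra.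
    pose proof (cond_pos d). lra. }
  pose proof (cond_pos d).
  destruct (Hd (d/2) Hb ltac:(lra)) as [B [Hy HyR]].
  change (Rabs (f (d/2) - 0) < Rabs (f r)) in B. rewrite (Hc (d/2) r) in B; auto.
  rewrite Rminus_0_r in B. lra.
Qed.

Ltac sides := repeat match goal with
  | |- _ /\ _ => split
  | |- True => exact I
  | |- ex_derive _ _ => eexists; eassumption
  end.

Lemma converse (rho0 p0 : R -> R) Rb p0c p pc : Rbar_lt 0 Rb -> solves_TOV rho0 p0 Rb ->
  regular_centre rho0 p0 p0c -> solves_TOV rho0 p Rb -> regular_centre rho0 p pc ->
  (forall r, 0 <= r -> Rbar_lt r Rb -> 0 < Dfun rho0 p0 (pc - p0c) r) /\
  (forall r, 0 < r -> Rbar_lt r Rb -> p r = p0 r + dpress rho0 p0 (pc - p0c) r).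
Proof.
  intros H0 HS [Hl Hp] HSq [_ Hpl].
  pose proof HS as [_ [Hc [Hd [HA Ht]]]].
  pose proof HSq as [_ [_ [_ [_ Hq]]]].
  destruct (base rho0 p0 Rb p0c H0 HS Hp) as [Dm [Lm [LA [DI [LI [DK [LK GK]]]]]]].
  set (dpc := pc - p0c).
  assert (Lv : filterlim (vfun rho0 p0 p) (at_right 0) (locally dpc)).
  { unfold vfun, Rdiv, Rminus. eapply lim_eqv. lim_tac.
    lra. rewrite sqrt_1; replace (-2*0) with 0 by ring; rewrite exp_0; lra.
    rr. rewrite sqrt_1; replace (-2*0) with 0 by ring; rewrite exp_0. unfold dpc. field. }
  set (phi := fun y => 4 * PI * kt rho0 p0 y * vfun rho0 p0 p y).
  assert (Cphi : forall c, 0 < c -> Rbar_lt c Rb -> continuous phi c).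
  { intros c Hc1 Hc2. apply exd_cont. unfold phi, kt, vfun.
    pose proof (Dm c Hc1 Hc2). pose proof (DI c Hc1 Hc2). pose proof (Hq c Hc1 Hc2). pose proof (Ht c Hc1 Hc2).
    pose proof (Apos_form _ _ (HA c Hc1 Hc2)).
    auto_derive. sides; try lra; try assumption.
    all: apply Rgt_not_eq; try apply Rmult_lt_0_compat; try apply exp_pos; apply sqrt_lt_R0; auto. }
  assert (Lphi : filterlim phi (at_right 0) (locally 0)).
  { unfold phi, kt, vfun, Rdiv, Rminus. eapply lim_eqv. lim_tac.
    lra. rewrite sqrt_1; lra. rr; ring. }
  destruct (masterJ phi 0 Rb H0 Cphi Lphi) as [DPhi [LPhi _]].
  set (Gf := fun y => (vfun rho0 p0 p y * (1 + 4 * PI * dpc * KI rho0 p0 y) - dpc) * exp (RInt phi 0 y)).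
  assert (Gd : forall r, 0 < r -> Rbar_lt r Rb -> is_derive Gf r 0).
  { intros r Hr HrR. apply conv_deriv; auto; try exact (DK r Hr HrR); exact (DPhi r Hr HrR). }
  assert (LG : filterlim Gf (at_right 0) (locally 0)).
  { unfold Gf, Rminus. eapply lim_eqv. lim_tac. rr; ring. }
  pose proof (zero_from_lim Gf Rb H0 (const_J Gf Rb Gd) LG) as G0.
  assert (E : forall r, 0 < r -> Rbar_lt r Rb -> vfun rho0 p0 p r * Dfun rho0 p0 dpc r = dpc).
  { intros r Hr HrR. specialize (G0 r Hr HrR). unfold Gf in G0.
    apply Rmult_integral in G0. destruct G0 as [G0|G0]. change (Dfun rho0 p0 dpc r) with (1 + 4 * PI * dpc * KI rho0 p0 r). lra.
    pose proof (exp_pos (RInt phi 0 r)). lra. }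
  assert (Dpos : forall r, 0 <= r -> Rbar_lt r Rb -> 0 < Dfun rho0 p0 dpc r).
  { intros r Hr0 HrR. destruct (Req_dec r 0) as [->|Hrn].
    { unfold Dfun. rewrite RInt_point. change (@zero R_CompleteNormedModule) with 0. rewrite Rmult_0_r. lra. }
    assert (Hr : 0 < r) by lra.
    destruct (Req_dec dpc 0) as [Hd0|Hd0].
    { change (0 < 1 + 4 * PI * dpc * KI rho0 p0 r). rewrite Hd0. rewrite Rmult_0_r, Rmult_0_l. lra. }
    destruct (Rlt_le_dec 0 (Dfun rho0 p0 dpc r)) as [Ok|Bad]; auto. exfalso.
    destruct (GK r Hr HrR) as [G [GC GE]].
    assert (Gz : G 0 = 0) by (rewrite GE by lra; rewrite RInt_point; reflexivity).
    assert (Zc : forall z, 0 < z -> Rbar_lt z Rb -> Dfun rho0 p0 dpc z <> 0).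
    { intros z Hz HzR Hz0. specialize (E z Hz HzR). rewrite Hz0, Rmult_0_r in E. auto. }
    destruct (Rle_lt_or_eq_dec _ _ Bad) as [Lt|Eq]; [|apply (Zc r); auto].
    assert (FE : forall z, 0 <= z -> - (1 + 4 * PI * dpc * G z) = - Dfun rho0 p0 dpc z).
    { intros z Hz. rewrite GE by auto. reflexivity. }
    destruct (Ranalysis5.IVT_interv (fun z => - (1 + 4 * PI * dpc * G z)) 0 r) as [z [Hz Hfz]].
    - intros a Ha. apply continuity_pt_filterlim. specialize (GC a ltac:(lra)).
      eapply lim_eqv. lim_tac. reflexivity.
    - exact Hr.
    - rewrite Gz, Rmult_0_r. lra.
    - rewrite FE by lra. lra.
    - destruct (Req_dec z 0) as [->|Hz0].
      + rewrite Gz, Rmult_0_r in Hfz. lra.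
      + apply (Zc z). lra. apply Rbar_le_lt_trans with (Finite r); auto. simpl; lra.
        rewrite FE in Hfz by lra. lra. }
  split.
  - exact Dpos.
  - intros r Hr HrR. specialize (E r Hr HrR). specialize (Dpos r ltac:(lra) HrR).
    unfold dpress. set (D := Dfun rho0 p0 dpc r) in *. clearbody D. rewrite <- E. unfold vfun. rr.
    assert (Hs : 0 < sqrt (1 - 2 * mass rho0 r / r)) by (apply sqrt_lt_R0; auto).
    pose proof (exp_pos (-2 * I0 rho0 p0 r)). field. split; lra.
Qed.

Theorem theoremP1 (rho0 p0 : R -> R) (Rb : Rbar) (p0c : R) :
  Rbar_lt 0 Rb ->
  solves_TOV rho0 p0 Rb ->
  regular_centre rho0 p0 p0c ->
  (forall (dpc : R) (Rb' : Rbar),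
      Rbar_lt 0 Rb' -> Rbar_le Rb' Rb ->
      (forall r, 0 <= r -> Rbar_lt r Rb' -> 0 < Dfun rho0 p0 dpc r) ->
      solves_TOV rho0 (fun r => p0 r + dpress rho0 p0 dpc r) Rb' /\
      regular_centre rho0 (fun r => p0 r + dpress rho0 p0 dpc r) (p0c + dpc))
  /\
  (forall (p : R -> R) (pc : R),
      solves_TOV rho0 p Rb ->
      regular_centre rho0 p pc ->
      (forall r, 0 <= r -> Rbar_lt r Rb -> 0 < Dfun rho0 p0 (pc - p0c) r) /\
      (forall r, 0 < r -> Rbar_lt r Rb -> p r = p0 r + dpress rho0 p0 (pc - p0c) r)).
Proof.
  intros H0 HS HR. split.
  - intros dpc Rb' H1 H2 H3. apply (forward rho0 p0 Rb p0c dpc Rb'); auto.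
  - intros p pc HS' HR'. apply (converse rho0 p0 Rb p0c p pc); auto.
Qed.
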